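(* Let $\mathbb Z^N\subset\mathbb R^N$ be the lattice generated by an orthonormal basis, let $F\subset\mathbb R^N$ be a subspace and $\phi:\mathbb R^N\to F$ the orthogonal projection. Let $F=V\oplus W$ be a direct sum decomposition into real subspaces such that $\phi(\mathbb Z^N)\cap V$ is dense in $V$, $\phi(\mathbb Z^N)\cap W$ is discrete, and $\phi(\mathbb Z^N)=(V\cap\phi(\mathbb Z^N))+(W\cap\phi(\mathbb Z^N))$. Then $(F\cap\mathbb Z^N)+(V\cap\phi(\mathbb Z^N))$ is a subgroup of finite index in $\phi(\mathbb Z^N)$, the lattice $F\cap\mathbb Z^N$ has rank $\dim F-\dim V$, and the real vector space spanned by $F\cap\mathbb Z^N$ is orthogonal to $V$. *)

(* Defs.v *)
From HB Require Import structures.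
From mathcomp Require Import all_boot all_order all_algebra.
From mathcomp Require Import reals.
Set Implicit Arguments. Unset Strict Implicit. Unset Printing Implicit Defensive.
Import Order.TTheory GRing.Theory Num.Theory.
Local Open Scope ring_scope.

Section Defs.
Variables (R : realType) (N : nat).
Local Notation vec := 'rV[R]_N.

(* standard inner product: the canonical basis is orthonormal *)
Definition dotv (x y : vec) : R := \sum_(i < N) x ord0 i * y ord0 i.
Definition sqnorm (x : vec) : R := dotv x x.

Definition int_vec (x : vec) : Prop := forall i, x ord0 i \is a Num.int.

Definition is_orth_proj (F : {vspace vec}) (phi : vec -> vec) : Prop :=
  forall v, phi v \in F /\ (forall f, f \in F -> dotv (v - phi v) f = 0).

Definition img_lattice (phi : vec -> vec) : vec -> Prop :=
  fun x => exists z, int_vec z /\ x = phi z.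

Definition setI_vs (S : vec -> Prop) (V : {vspace vec}) : vec -> Prop :=
  fun x => S x /\ x \in V.

Definition sumset (A B : vec -> Prop) : vec -> Prop :=
  fun x => exists a b, A a /\ B b /\ x = a + b.

Definition dense_in (S : vec -> Prop) (V : {vspace vec}) : Prop :=
  forall v, v \in V -> forall e : R, 0 < e -> exists x, S x /\ sqnorm (v - x) < e.

Definition discrete (S : vec -> Prop) : Prop :=
  forall x, S x -> exists2 e : R, 0 < e & forall y, S y -> y != x -> e <= sqnorm (y - x).

Definition is_subgroup_of (H G : vec -> Prop) : Prop :=
  (forall x, H x -> G x) /\ H 0 /\ (forall x y, H x -> H y -> H (x - y)).

Definition finite_index (H G : vec -> Prop) : Prop :=
  exists s : seq vec, forall x, G x -> exists r h, r \in s /\ H h /\ x = r + h.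

Definition lattice_rank (L : vec -> Prop) (k : nat) : Prop :=
  exists b : 'I_k -> vec,
    (forall i, L (b i)) /\
    (forall c : 'I_k -> int, \sum_(i < k) (c i)%:~R *: b i = 0 -> forall i, c i = 0) /\
    (forall x, L x -> exists c : 'I_k -> int, x = \sum_(i < k) (c i)%:~R *: b i).

Definition real_span (L : vec -> Prop) : vec -> Prop :=
  fun x => exists n (b : 'I_n -> vec) (c : 'I_n -> R),
    (forall i, L (b i)) /\ x = \sum_(i < n) c i *: b i.

End Defs.

(* Main.v *)
Require Import Defs.
From HB Require Import structures.
From mathcomp Require Import all_boot all_order all_algebra.
From mathcomp Require Import reals.
From mathcomp Require Import ring lra zify.
From Stdlib Require Import Classical_Prop.
Import Order.TTheory GRing.Theory Num.Theory.
Local Open Scope ring_scope.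
Set Implicit Arguments. Unset Strict Implicit. Unset Printing Implicit Defensive.

Section S.
Variables (R : realType) (N : nat).
Local Notation vec := 'rV[R]_N.
Implicit Types x y z : vec.

Lemma dotvE x y : dotv x y = (x *m y^T) 0 0.
Proof. by rewrite /dotv !mxE; apply: eq_bigr => i _; rewrite !mxE. Qed.

Lemma dotvC x y : dotv x y = dotv y x.
Proof. by rewrite /dotv; apply: eq_bigr => i _; rewrite mulrC. Qed.

Lemma dotvDl x y z : dotv (x + y) z = dotv x z + dotv y z.
Proof. by rewrite !dotvE mulmxDl mxE. Qed.

Lemma dotvZl a x y : dotv (a *: x) y = a * dotv x y.
Proof. by rewrite !dotvE -scalemxAl mxE. Qed.

Lemma dotvNl x y : dotv (- x) y = - dotv x y.
Proof. by rewrite !dotvE mulNmx mxE. Qed.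

Lemma dotvBl x y z : dotv (x - y) z = dotv x z - dotv y z.
Proof. by rewrite dotvDl dotvNl. Qed.

Lemma dotv0l y : dotv 0 y = 0.
Proof. by rewrite dotvE mul0mx mxE. Qed.

Lemma dotvDr x y z : dotv z (x + y) = dotv z x + dotv z y.
Proof. by rewrite dotvC dotvDl !(dotvC z). Qed.
Lemma dotvZr a x y : dotv y (a *: x) = a * dotv y x.
Proof. by rewrite dotvC dotvZl dotvC. Qed.
Lemma dotvBr x y z : dotv z (x - y) = dotv z x - dotv z y.
Proof. by rewrite dotvC dotvBl !(dotvC z). Qed.
Lemma dotv0r y : dotv y 0 = 0.
Proof. by rewrite dotvC dotv0l. Qed.

Lemma dotv_suml (I : Type) (r : seq I) (P : pred I) (G : I -> vec) y :
  dotv (\sum_(i <- r | P i) G i) y = \sum_(i <- r | P i) dotv (G i) y.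
Proof.
elim/big_rec2: _ => [|i a b _ <-]; first by rewrite dotv0l.
by rewrite dotvDl.
Qed.

Lemma dotvMl m (u : 'rV[R]_m) (A : 'M[R]_(m, N)) y :
  dotv (u *m A) y = (u *m (A *m y^T)) 0 0.
Proof. by rewrite dotvE mulmxA. Qed.

Lemma sqnorm_ge0 x : 0 <= sqnorm x.
Proof. by apply: sumr_ge0 => i _; rewrite -expr2 sqr_ge0. Qed.

Lemma sqnorm_eq0 x : sqnorm x = 0 -> x = 0.
Proof.
move=> h; apply/rowP => i; rewrite mxE.
have H0 : forall j : 'I_N, true -> x 0 j * x 0 j = 0.
  by apply: psumr_eq0P h => j _; rewrite -expr2 sqr_ge0.
move/eqP: (H0 i isT); rewrite mulf_eq0 orbb => /eqP -> //.

Qed.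


Lemma am_gm a z u : 0 < a ->
  2 * `|dotv z u| <= a * sqnorm z + a^-1 * sqnorm u.
Proof.
move=> a0.
have h1 := sqnorm_ge0 (a *: z - u).
have h2 := sqnorm_ge0 (a *: z + u).
rewrite /sqnorm in h1 h2.
rewrite dotvBl !dotvBr !dotvZl !dotvZr (dotvC u z) in h1.
rewrite dotvDl !dotvDr !dotvZl !dotvZr (dotvC u z) in h2.
rewrite -/(sqnorm z) -/(sqnorm u) in h1 h2.
set S := sqnorm z in h1 h2 *; set U := sqnorm u in h1 h2 *.
set d := dotv z u in h1 h2 *.
set U' := a^-1 * U.
have hU : U = a * U' by rewrite /U' mulrA mulfV ?gt_eqF // mul1r.
rewrite hU in h1 h2.
have k1 : 0 <= a * (a * S - 2 * d + U') by lra.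
have k2 : 0 <= a * (a * S + 2 * d + U') by lra.
rewrite pmulr_rge0 // in k1; rewrite pmulr_rge0 // in k2.
case: (ler0P d) => hd; lra.
Qed.

Lemma int_01 (x : R) : x \is a Num.int -> 0 < x -> x < 1 -> False.
Proof.
move=> /intrP [m ->]; rewrite ltr0z (_ : 1 = 1%:~R) // ltr_int => h1 h2.
lia.
Qed.

End S.

Section Proj.
Variables (R : realType) (N : nat) (F : {vspace 'rV[R]_N}) (phi : 'rV[R]_N -> 'rV[R]_N).
Hypothesis hphi : is_orth_proj F phi.
Local Notation vec := 'rV[R]_N.
Implicit Types x y z : vec.

Lemma orth_uniq x p : p \in F -> (forall f, f \in F -> dotv (x - p) f = 0) -> phi x = p.
Proof.
move=> pF hp; have [qF hq] := hphi x.
have dF : p - phi x \in F by rewrite memvB.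
suff : sqnorm (p - phi x) = 0 by move/sqnorm_eq0/eqP; rewrite subr_eq0 => /eqP.
have eD : p - phi x = (x - phi x) - (x - p) by rewrite opprB [RHS]addrC addrA subrK.
by rewrite /sqnorm {1}eD dotvBl hq // hp // subrr.
Qed.

Definition Pm : 'M[R]_N := \matrix_(i < N) phi (delta_mx 0 i).

Lemma vec_sum x : x = \sum_(i < N) x 0 i *: delta_mx 0 i.
Proof.
by rewrite -{1}[x]mulmx1 mulmx_sum_row; apply: eq_bigr => i _; rewrite row1.
Qed.

Lemma phiP x : phi x = x *m Pm.
Proof.
apply: orth_uniq.
  rewrite mulmx_sum_row; apply: memv_suml => i _; apply: memvZ.
  by rewrite rowK; case: (hphi (delta_mx 0 i)).
move=> f fF; rewrite {1}(vec_sum x) mulmx_sum_row -sumrB dotv_suml.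
apply: big1 => i _; rewrite rowK -scalerBr dotvZl.
by case: (hphi (delta_mx 0 i)) => _ h; rewrite h ?mulr0.
Qed.

Lemma PmF x : x *m Pm \in F.
Proof. by rewrite -phiP; case: (hphi x). Qed.

Lemma Pm_orth x f : f \in F -> dotv (x - x *m Pm) f = 0.
Proof. by move=> fF; rewrite -phiP; case: (hphi x) => _ h; exact: h. Qed.

Lemma Pm_fix f : f \in F -> f *m Pm = f.
Proof.
move=> fF; rewrite -phiP; apply: orth_uniq => // g _.
by rewrite subrr dotv0l.
Qed.

Lemma dot_Pm z y : z \in F -> dotv z (y *m Pm) = dotv z y.
Proof.
move=> zF; apply/eqP; rewrite -subr_eq0 -dotvBr dotvC.
by rewrite -opprB dotvNl Pm_orth // oppr0.
Qed.

End Proj.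

Section IntMx.
Variable (R : realType).

Definition intmx m n (A : 'M[R]_(m, n)) := forall i j, A i j \is a Num.int.

Lemma int_vecE N (x : 'rV[R]_N) : int_vec x <-> intmx x.
Proof. by split => h i => [j|]; rewrite ?[i]ord1 h. Qed.

Lemma intmxM m n p (A : 'M[R]_(m, n)) (B : 'M[R]_(n, p)) :
  intmx A -> intmx B -> intmx (A *m B).
Proof. by move=> hA hB i j; rewrite mxE rpred_sum // => k _; rewrite rpredM. Qed.

Lemma intmxD m n (A B : 'M[R]_(m, n)) : intmx A -> intmx B -> intmx (A + B).
Proof. by move=> hA hB i j; rewrite mxE rpredD. Qed.

Lemma intmxN m n (A : 'M[R]_(m, n)) : intmx A -> intmx (- A).
Proof. by move=> hA i j; rewrite mxE rpredN. Qed.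

Lemma intmxB m n (A B : 'M[R]_(m, n)) : intmx A -> intmx B -> intmx (A - B).
Proof. by move=> hA hB; apply: intmxD => //; apply: intmxN. Qed.

Lemma intmx0 m n : intmx (0 : 'M[R]_(m, n)).
Proof. by move=> i j; rewrite mxE. Qed.

Lemma intmx_delta m n i0 j0 : intmx (delta_mx i0 j0 : 'M[R]_(m, n)).
Proof. by move=> i j; rewrite mxE; case: (_ && _); rewrite ?rpred0 ?rpred1. Qed.

Lemma intmx_scale m n (c : int) (A : 'M[R]_(m, n)) : intmx A -> intmx (c%:~R *: A).
Proof. by move=> hA i j; rewrite mxE rpredM // intr_int. Qed.

Lemma intmx_map m n (A : 'M[int]_(m, n)) : intmx (map_mx intr A).
Proof. by move=> i j; rewrite mxE intr_int. Qed.

Lemma intmx_row m n i (A : 'M[R]_(m, n)) : intmx A -> intmx (row i A).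
Proof. by move=> hA i' j; rewrite mxE. Qed.

Lemma intmx_lsub m n1 n2 (A : 'M[R]_(m, n1 + n2)) : intmx A -> intmx (lsubmx A).
Proof. by move=> hA i j; rewrite mxE. Qed.
Lemma intmx_rsub m n1 n2 (A : 'M[R]_(m, n1 + n2)) : intmx A -> intmx (rsubmx A).
Proof. by move=> hA i j; rewrite mxE. Qed.

End IntMx.

Section T1.
Variables (R : realType) (N : nat) (F V : {vspace 'rV[R]_N}) (phi : 'rV[R]_N -> 'rV[R]_N).
Hypothesis hphi : is_orth_proj F phi.
Hypothesis hdense : dense_in (setI_vs (img_lattice phi) V) V.
Local Notation vec := 'rV[R]_N.

Lemma dot_int (z y : vec) : intmx z -> intmx y -> dotv z y \is a Num.int.
Proof. by move=> hz hy; rewrite rpred_sum // => i _; rewrite rpredM. Qed.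

Lemma T1 (z v : vec) : int_vec z -> z \in F -> v \in V -> dotv z v = 0.
Proof.
move=> /int_vecE zi zF vV.
case: (eqVneq (dotv z v) 0) => // ht; exfalso.
set t := dotv z v in ht.
pose v' := (2 * t)^-1 *: v.
have v'V : v' \in V by rewrite memvZ.
have dz' : dotv z v' = 2^-1 by rewrite dotvZr -/t; field; rewrite ht.
pose S := sqnorm z; pose a := (2 * (S + 1))^-1.
have S0 : 0 <= S by apply: sqnorm_ge0.
have a0 : 0 < a by rewrite invr_gt0; lra.
have [x [[[y [yi ->]] xV] hx]] := hdense v'V (ltac:(lra) : 0 < a / 2).
rewrite (phiP hphi) in hx.
have hn := dot_int zi ((int_vecE y).1 yi).
have := am_gm z (v' - y *m Pm phi) a0.
rewrite dotvBr dz' (dot_Pm hphi) //.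
have haS : a * S < 2^-1.
  have e : 2 * (S + 1) * a = 1 by rewrite mulfV //; lra.
  have : 2 * (a * S) + 2 * a = 2 * (S + 1) * a by ring.
  rewrite e.
  lra.
have hb : a^-1 * sqnorm (v' - y *m Pm phi) < 2^-1.
  rewrite -(ltr_pM2l a0) mulrA mulfV ?gt_eqF // mul1r; lra.
move=> h.
have h2 : 2 * `|2^-1 - dotv z y| < 1 by rewrite -/S in h; lra.
set n := dotv z y in hn h2.
apply: (int_01 hn).
  case: (ler0P (2^-1 - n)) h2 => hc h3; lra.
case: (ler0P (2^-1 - n)) h2 => hc h3; lra.
Qed.

End T1.

Lemma ex_min_nat (Q : nat -> Prop) :
  (exists n, Q n) -> exists n, Q n /\ forall m, Q m -> (n <= m)%N.
Proof.
case=> n; elim: n {-2}n (leqnn n) => [|n IH] m hm Qm.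
  by exists m; split => // m' _; move: hm; rewrite leqn0 => /eqP ->.
case: (classic (exists m', (m' < m)%N /\ Q m')) => [[m' [lt Qm']]|nex].
  by apply: (IH m') => //; lia.
exists m; split => // m' Qm'; rewrite leqNgt; apply/negP => lt.
by apply: nex; exists m'.
Qed.

Definition ext j T (f : 'I_j -> T) (t : T) (i : 'I_j.+1) : T :=
  if insub (val i) is Some i' then f i' else t.

Lemma ext_widen j T (f : 'I_j -> T) t i : ext f t (widen_ord (leqnSn j) i) = f i.
Proof. by rewrite /ext /= valK. Qed.

Lemma ext_max j T (f : 'I_j -> T) t : ext f t ord_max = t.
Proof. by rewrite /ext /= insubN // ltnn. Qed.

Lemma ord_split j (i : 'I_j.+1) :
  (exists i', i = widen_ord (leqnSn j) i') \/ i = ord_max.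
Proof.
case: (ltnP i j) => h; [left; exists (Ordinal h) | right]; apply: val_inj => //=.
by apply/eqP; rewrite eqn_leq h -ltnS ltn_ord.
Qed.

Section SB.
Variables (R : realType) (k : nat).
Local Notation vec := 'rV[R]_k.

Definition zgroup (G : vec -> Prop) :=
  [/\ G 0, forall x y, G x -> G y -> G (x - y) & forall x, G x -> int_vec x].

Lemma zgroupN G x : zgroup G -> G x -> G (- x).
Proof. by case=> G0 GB _ Gx; rewrite -sub0r; apply: GB. Qed.

Lemma zgroupD G x y : zgroup G -> G x -> G y -> G (x + y).
Proof.
move=> zG Gx Gy; rewrite -[y]opprK; have [_ GB _] := zG; apply: GB => //.
by apply: zgroupN.
Qed.

Lemma zgroupZ G (z : int) x : zgroup G -> G x -> G (z%:~R *: x).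
Proof.
move=> zG Gx.
have hn : forall n : nat, G (n%:R *: x).
  elim=> [|n IH]; first by rewrite scale0r; case: zG.
  by rewrite mulrS scalerDl scale1r; apply: zgroupD.
case: z => n; first exact: hn.
by rewrite NegzE mulrNz scaleNr; apply: zgroupN => //; apply: hn.
Qed.

Lemma SB (G : vec -> Prop) (c : nat) : (0 < c)%N -> zgroup G -> forall j, (j <= k)%N ->
  (forall x, G x -> forall i : 'I_k, (j <= i)%N -> x 0 i = 0) ->
  (forall i : 'I_k, (i < j)%N -> G (c%:R *: delta_mx 0 i)) ->
  exists b : 'I_j -> vec, [/\ forall i, G (b i),
     (forall cf : 'I_j -> int, \sum_(i < j) (cf i)%:~R *: b i = 0 -> forall i, cf i = 0)
   & forall x, G x -> exists cf : 'I_j -> int, x = \sum_(i < j) (cf i)%:~R *: b i].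
Proof.
move=> c0 zG j; elim: j G zG => [|j IH] G zG hj hsupp hc.
  exists (fun _ => 0); split.
  - by case: zG.
  - by move=> cf _ [].
  move=> x Gx; exists (fun _ => 0); rewrite big_ord0; apply/rowP => i.
  by rewrite mxE hsupp.
have jk : (j < k)%N := hj.
pose jo := Ordinal jk.
pose G' x := G x /\ x 0 jo = 0.
have zG' : zgroup G'.
  case: zG => G0 GB Gi; split.
  - by split => //; rewrite mxE.
  - by move=> x y [Gx xj] [Gy yj]; split; [apply: GB | rewrite !mxE xj yj subrr].
  - by move=> x [Gx _]; apply: Gi.
have H1 : forall x, G' x -> forall i : 'I_k, (j <= i)%N -> x 0 i = 0.
  move=> x [Gx xj] i hi; case: (eqVneq i jo) => [->//|ne].
  apply: hsupp Gx _ _.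
  have : (i : nat) != j by apply: contra ne => /eqP e; apply/eqP/val_inj.
  lia.
have H2 : forall i : 'I_k, (i < j)%N -> G' (c%:R *: delta_mx 0 i).
  move=> i hi; split; first by apply: hc; lia.
  rewrite !mxE eqxx /=.
  have -> : (jo == i) = false.
    by apply/eqP => e; have := congr1 val e => /= e'; lia.
  by rewrite mulr0.
have [b' [Gb' indb' spb']] := IH G' zG' (ltnW hj) H1 H2.
pose Q n := (0 < n)%N /\ exists x, G x /\ x 0 jo = n%:R.
have [g [[g0 [gam [Ggam gamj]]] gmin]] : exists n, Q n /\ forall m, Q m -> (n <= m)%N.
  apply: ex_min_nat; exists c; split => //; exists (c%:R *: delta_mx 0 jo).
  by split; [apply: hc => /= | rewrite !mxE !eqxx mulr1].
have gR : 0 < (g%:R : R) by rewrite ltr0n.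
pose b := ext b' gam.
have hbw : forall i, b (widen_ord (leqnSn j) i) = b' i by move=> i; apply: ext_widen.
have hbm : b ord_max = gam by apply: ext_max.
exists b; split.
- move=> i; case: (ord_split i) => [[i' ->]|->]; first by rewrite hbw; case: (Gb' i').
  by rewrite hbm.
- move=> cf; rewrite big_ord_recr /= hbm.
  under eq_bigr => i _ do rewrite hbw.
  move=> hs.
  have hj0 : cf ord_max = 0.
    move/rowP: hs => /(_ jo); rewrite !mxE summxE.
    rewrite big1; last by move=> i _; rewrite mxE; case: (Gb' i) => _ ->; rewrite mulr0.
    rewrite add0r gamj => /eqP; rewrite mulf_eq0 (gt_eqF gR) orbF intr_eq0.
    by move/eqP.
  move: hs; rewrite hj0 scale0r addr0 => /indb' h i.
  by case: (ord_split i) => [[i' ->]|->] //; apply: h.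
move=> x Gx.
have xi : x 0 jo \is a Num.int by case: zG => _ _ Gi; apply: (Gi x Gx jo).
pose q := Num.floor (x 0 jo / g%:R).
pose x' := x - q%:~R *: gam.
have Gx' : G x' by have [_ GB _] := zG; apply: GB => //; apply: zgroupZ.
have hq1 : q%:~R * g%:R <= x 0 jo by rewrite -ler_pdivlMr // floor_le.
have hq2 : x 0 jo < (q + 1)%:~R * g%:R by rewrite -ltr_pdivrMr // floorD1_gt.
have x'j : x' 0 jo = 0.
  have e : x' 0 jo = x 0 jo - q%:~R * g%:R by rewrite !mxE gamj.
  have ri : x' 0 jo \is a Num.int by rewrite e rpredB // rpredM // ?intr_int ?natr_int.
  rewrite intrD mulrDl mul1r in hq2.
  have r0 : 0 <= x' 0 jo by rewrite e; lra.
  have rg : x' 0 jo < g%:R by rewrite e; lra.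
  case: (eqVneq (x' 0 jo) 0) => // rn0; exfalso.
  move: ri r0 rg rn0; move/intrP => [m em]; rewrite em ler0z => m0 mg mn0.
  have : Q `|m|%N.
    split; first by rewrite absz_gt0; apply: contra mn0 => /eqP ->.
    by exists x'; split => //; rewrite em natr_absz ger0_norm.
  move/gmin; rewrite -(ler_nat R) natr_absz ger0_norm //.
  lra.
have [cf' hcf'] := spb' x' (conj Gx' x'j).
exists (ext cf' q); rewrite big_ord_recr /= ext_max hbm.
under eq_bigr => i _ do rewrite hbw ext_widen.
by rewrite -hcf' subrK.
Qed.

End SB.

Section PH.
Variable R : realType.

Definition fr (x : R) := x - (Num.floor x)%:~R.
Lemma fr_ge0 x : 0 <= fr x.
Proof. by rewrite /fr subr_ge0 floor_le. Qed.
Lemma fr_lt1 x : fr x < 1.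
Proof. by rewrite /fr; have := floorD1_gt x; rewrite intrD /=; lra. Qed.

Definition S0 r p (Bs : 'M[R]_(r, p)) := \sum_(l < p) (\sum_(i < r) `|Bs i l|) ^+ 2.

Lemma sqnorm_bound r p (t : 'rV[R]_r) (Bs : 'M[R]_(r, p)) (de : R) : 0 <= de ->
  (forall i, `|t 0 i| <= de) -> sqnorm (t *m Bs) <= de ^+ 2 * S0 Bs.
Proof.
move=> de0 ht; rewrite /sqnorm /dotv /S0 mulr_sumr; apply: ler_sum => l _.
rewrite mxE; set a := \sum_(j < r) _.
have ha : `|a| <= de * \sum_(i < r) `|Bs i l|.
  rewrite mulr_sumr; apply: le_trans (ler_norm_sum _ _ _) _; apply: ler_sum => i _.
  by rewrite normrM ler_wpM2r.
have -> : a * a = `|a| * `|a| by rewrite -normrM ger0_norm // -expr2 sqr_ge0.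
by rewrite -exprMn expr2; apply: ler_pM.
Qed.

Lemma cube_lt (K : nat) (x : R) : (0 < K)%N ->
  (0 <= Num.floor (K%:R * fr x))%R /\ (`|Num.floor (K%:R * fr x)| < K)%N.
Proof.
move=> K0; have h0 := fr_ge0 x; have h1 := fr_lt1 x.
have hK : (0 : R) < K%:R by rewrite ltr0n.
have a0 : 0 <= K%:R * fr x by rewrite mulr_ge0 // ltW.
have a1 : K%:R * fr x < K%:R by rewrite -[X in _ < X]mulr1 ltr_pM2l.
split; first by rewrite floor_ge0.
have : Num.floor (K%:R * fr x) < K%:Z by rewrite floor_lt_int.
by rewrite -[(`|_|)%N]/(absz _); case: (Num.floor _) (floor_ge0 (K%:R * fr x)) => n; rewrite a0.
Qed.

Lemma cube_eq (K : nat) (x y : R) : (0 < K)%N ->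
  absz (Num.floor (K%:R * fr x)) = absz (Num.floor (K%:R * fr y)) ->
  `|fr x - fr y| < K%:R^-1.
Proof.
move=> K0 e.
have [hx0 _] := cube_lt x K0; have [hy0 _] := cube_lt y K0.
have e' : Num.floor (K%:R * fr x) = Num.floor (K%:R * fr y).
  by rewrite -(gez0_abs hx0) -(gez0_abs hy0) e.
have hK : (0 : R) < K%:R by rewrite ltr0n.
have := floor_le (K%:R * fr x); have := floorD1_gt (K%:R * fr x).
have := floor_le (K%:R * fr y); have := floorD1_gt (K%:R * fr y).
rewrite e' intrD /=; set z := (Num.floor _)%:~R => h1 h2 h3 h4.
have : `|K%:R * fr x - K%:R * fr y| < 1.
  by case: (ler0P (K%:R * fr x - K%:R * fr y)) => _; lra.
by rewrite -mulrBr normrM ger0_norm ?ler0n // -ltr_pdivlMl // mulr1.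
Qed.

Lemma PH n r p (C : 'M[R]_(n, r)) (Bs : 'M[R]_(r, p)) (e : R) : 0 < e ->
  (forall (u : 'rV[R]_n) (t : 'rV[R]_r), intmx u -> intmx t ->
     u *m C *m Bs - t *m Bs != 0 -> e <= sqnorm (u *m C *m Bs - t *m Bs)) ->
  exists d : nat, exists Aq : 'M[int]_(n, r),
     (0 < d)%N /\ d%:R *: (C *m Bs) = map_mx intr Aq *m Bs.
Proof.
move=> e0 hdisc.
set S := S0 Bs.
have Sge : 0 <= S by apply: sumr_ge0 => l _; rewrite sqr_ge0.
pose K := (Num.bound (S / e)).+1.
have K0 : (0 < K)%N by [].
have hKR : (0 : R) < K%:R by rewrite ltr0n.
have hK : S < K%:R * e.
  have := archi_boundP (divr_ge0 Sge (ltW e0)).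
  rewrite ltr_pdivrMr // => h; apply: lt_le_trans h _.
  by rewrite ler_pM2r // ler_nat.
pose cube (x : R) : 'I_K := inord (absz (Num.floor (K%:R * fr x))).
have cubeP : forall x y, cube x = cube y -> `|fr x - fr y| < K%:R^-1.
  move=> x y /(congr1 val); rewrite /cube /= !inordK; first exact: cube_eq.
  - by case: (cube_lt y K0).
  - by case: (cube_lt x K0).
pose M := (K ^ (n * r))%N.
pose g (m : 'I_M.+1) := [ffun ij : 'I_n * 'I_r => cube (m%:R * C ij.1 ij.2)].
have : ~~ injectiveb g.
  apply/negP => /injectiveP /leq_card.
  by rewrite card_ffun card_prod !card_ord ltnn.
case/injectivePn => m1 [m2 ne eqg].
wlog lt12 : m1 m2 ne eqg / (m1 < m2)%N.
  move=> H; case: (ltngtP m1 m2) => h; first exact: H h.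
    by apply: (H m2 m1) => //; rewrite eq_sym.
  by move: ne; rewrite (val_inj h) eqxx.
pose d := (m2 - m1)%N.
pose Aq := \matrix_(i, j) (Num.floor (m2%:R * C i j) - Num.floor (m1%:R * C i j)).
exists d, Aq; split; first by rewrite subn_gt0.
have hT : forall i j, `|(d%:R *: C - map_mx intr Aq) i j| <= K%:R^-1.
  move=> i j; have := eqg; move/ffunP => /(_ (i, j)); rewrite !ffunE => /cubeP h.
  rewrite -[(i, j).1]/i -[(i, j).2]/j in h.
  have eT : (d%:R *: C - map_mx intr Aq) i j = d%:R * C i j -
     (Num.floor (m2%:R * C i j) - Num.floor (m1%:R * C i j))%:~R.
    rewrite !mxE; reflexivity.
  rewrite eT; apply: ltW; apply: le_lt_trans h.
  rewrite [X in _ <= X]distrC /fr /d natrB; last exact: ltnW.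
  rewrite intrB.
  set a := (Num.floor (m2%:R * C i j))%:~R; set b := (Num.floor (m1%:R * C i j))%:~R.
  set c := C i j; rewrite mulrBl.
  by rewrite le_eqVlt; apply/orP; left; apply/eqP; congr `|_|; ring.
have e1 : d%:R *: (C *m Bs) - map_mx intr Aq *m Bs = (d%:R *: C - map_mx intr Aq) *m Bs.
  by rewrite mulmxBl scalemxAl.
apply/eqP; rewrite -subr_eq0 e1; apply/eqP.
apply/row_matrixP => i; rewrite row0 row_mul.
set v := row i _ *m Bs.
case: (eqVneq v 0) => // vn0; exfalso.
have hv : v = (d%:R *: delta_mx 0 i) *m C *m Bs - row i (map_mx intr Aq) *m Bs.
  rewrite /v rowE mulmxBr -scalemxAr scalemxAl -rowE mulmxBl; reflexivity.
have hu : intmx (d%:R *: delta_mx 0 i : 'rV[R]_n).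
  by move=> a b; rewrite mxE rpredM ?natr_int //; apply: intmx_delta.
have ht : @intmx R _ _ (row i (map_mx intr Aq)).
  by move=> a b; rewrite !mxE; exact: intr_int.
have hev := hdisc _ _ hu ht; rewrite -hv in hev; have {hev} hev := hev vn0.
have Ki0 : 0 <= K%:R^-1 :> R by rewrite invr_ge0 ltW.
have hb : sqnorm v <= K%:R^-1 ^+ 2 * S.
  by apply: sqnorm_bound => // j; rewrite mxE; exact: hT.
have hKi : K%:R^-1 <= (1 : R) by rewrite invf_le1 // ler1n.
have : K%:R^-1 ^+ 2 * S <= K%:R^-1 * S.
  by rewrite expr2 ler_wpM2r // -[X in _ <= X]mulr1 ler_wpM2l.
have : K%:R^-1 * S < e by rewrite mulrC ltr_pdivrMr // mulrC.
lra.
Qed.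

End PH.

Lemma clear_den m n (X : 'M[rat]_(m, n)) :
  exists c : nat, (0 < c)%N /\ forall i j, c%:R * X i j \is a Num.int.
Proof.
exists (\prod_(ij : 'I_m * 'I_n) `|denq (X ij.1 ij.2)|)%N; split.
  by rewrite prodn_gt0 // => ij; rewrite absz_gt0 denq_neq0.
move=> i j; rewrite (bigD1 (i, j)) //= natrM mulrC mulrA.
rewrite rpredM ?natr_int //.
rewrite natr_absz normr_denq -numqE; exact: intr_int.
Qed.

Section Main.
Variables (R : realType) (N : nat) (F V W : {vspace 'rV[R]_N})
  (phi : 'rV[R]_N -> 'rV[R]_N).
Hypothesis hphi : is_orth_proj F phi.
Hypothesis hVW : (V + W)%VS = F.
Hypothesis hcap : (V :&: W)%VS = 0%VS.
Hypothesis hdense : dense_in (setI_vs (img_lattice phi) V) V.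
Hypothesis hdisc : discrete (setI_vs (img_lattice phi) W).
Local Notation P := (Pm phi).
Local Notation L := (img_lattice phi).
Local Notation vec := 'rV[R]_N.
Implicit Types x y w : vec.

Lemma capVW x : x \in V -> x \in W -> x = 0.
Proof.
by move=> xV xW; apply/eqP; rewrite -memv0 -hcap memv_cap xV xW.
Qed.

Lemma LE x : L x <-> exists y, int_vec y /\ x = y *m P.
Proof.
by split => [[y [yi ->]]|[y [yi ->]]]; exists y; rewrite (phiP hphi).
Qed.

Lemma WF x : x \in W -> x \in F.
Proof. by move=> xW; rewrite -hVW; apply: (subvP (addvSr V W)). Qed.
Lemma VF x : x \in V -> x \in F.
Proof. by move=> xV; rewrite -hVW; apply: (subvP (addvSl V W)). Qed.

Lemma rowsU (U : {vspace vec}) m (A : 'M[R]_(m, N)) (hA : forall j, row j A \in U) (x : 'rV[R]_m) :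
  x *m A \in U.
Proof. by rewrite mulmx_sum_row; apply: memv_suml => i _; apply: memvZ. Qed.

Variables (Am Qm : 'M[R]_N).
Hypothesis hAm : forall j, row j Am \in V.
Hypothesis hQm : intmx Qm.
Hypothesis hBW : forall j, row j (Qm *m P) \in W.
Hypothesis hP : P = Am + Qm *m P.
Local Notation Bm := (Qm *m P).

Lemma xAm x : x *m Am \in V. Proof. exact: rowsU. Qed.
Lemma xBm x : x *m Bm \in W. Proof. exact: rowsU. Qed.

Lemma xP x : x *m P = x *m Am + x *m Bm.
Proof. by rewrite {1}hP mulmxDr. Qed.

Lemma W_fix w : w \in W -> w *m Bm = w.
Proof.
move=> wW; have := Pm_fix hphi (WF wW); rewrite xP => e.
have : w - w *m Bm = w *m Am.
  rewrite -[X in X - _]e. by rewrite GRing.addrK.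
move=> e2; apply/eqP; rewrite eq_sym -subr_eq0; apply/eqP.
by apply: capVW; rewrite e2 ?xAm // -e2 memvB // xBm.
Qed.

Lemma kerP x : x *m P = 0 -> x *m Bm = 0.
Proof.
rewrite xP => e; apply: capVW; last exact: xBm.
have -> : x *m Bm = - (x *m Am) by apply/eqP; rewrite -addr_eq0 addrC e.
by rewrite memvN xAm.
Qed.

Lemma LW_int y : int_vec y -> setI_vs L W (y *m Bm).
Proof.
move=> yi; split; last exact: xBm.
apply/LE; exists (y *m Qm); split; last by rewrite mulmxA.
by apply/int_vecE; apply: intmxM => //; apply/int_vecE.
Qed.

Definition rB := \rank Bm.
Definition fB := maxrankfun Bm.
Definition Bs := rowsub fB Bm.
Definition Es : 'M[R]_(rB, N) := rowsub fB 1%:M.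
Definition Cm := Bm *m pinvmx Bs.

Lemma Bs_free : row_free Bs. Proof. exact: maxrowsub_free. Qed.
Lemma BsE : Bs = Es *m Bm. Proof. by rewrite /Bs rowsubE. Qed.
Lemma CmE : Cm *m Bs = Bm.
Proof.
apply: mulmxKpV; have := eq_maxrowsub Bm.
by move=> e; rewrite /Bs e.
Qed.

Lemma PH_app : exists d : nat, exists Aq : 'M[int]_(N, rB),
     (0 < d)%N /\ d%:R *: Bm = map_mx intr Aq *m Bs.
Proof.
have L0 : setI_vs L W 0.
  split; last exact: mem0v.
  by apply/LE; exists 0; split; [move=> i; rewrite mxE rpred0 | rewrite mul0mx].
have [e e0 he] := hdisc L0.
have hyp : forall (u : 'rV[R]_N) (t : 'rV[R]_rB), intmx u -> intmx t ->
     u *m Cm *m Bs - t *m Bs != 0 -> e <= sqnorm (u *m Cm *m Bs - t *m Bs).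
  move=> u t ui ti; rewrite -mulmxA CmE BsE (mulmxA t Es) -mulmxBl => hn.
  have := he _ _ hn; rewrite subr0; apply.
  apply: LW_int; apply/int_vecE; apply: intmxB => //; apply: intmxM => //.
  by move=> a b; rewrite !mxE; case: (_ == _); rewrite ?rpred0 ?rpred1.
have [d [Aq [d0 hd]]] := @PH R N rB N Cm Bs e e0 hyp.
by exists d, Aq; split => //; rewrite -CmE.
Qed.

Lemma dimW : \dim W = rB.
Proof.
pose X := [tuple row i Bs | i < rB].
have XW : <<X>>%VS = W.
  apply/eqP; rewrite eqEsubv; apply/andP; split.
    apply/span_subvP => v /tnthP [i ->]; rewrite tnth_mktuple /Bs row_rowsub.
    exact: hBW.
  apply/subvP => w wW; rewrite -(W_fix wW) -CmE mulmxA mulmx_sum_row.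
  apply: memv_suml => i _; apply: memvZ; apply: memv_span.
  by rewrite -(tnth_mktuple (fun i => row i Bs)); apply: mem_tnth.
have fX : free X.
  apply/freeP => k hk i.
  have : (\row_j k j) *m Bs = 0.
    rewrite mulmx_sum_row -[RHS]hk; apply: eq_bigr => j _.
    by rewrite mxE -tnth_nth tnth_mktuple.
  move/eqP; rewrite (mulmx_free_eq0 _ Bs_free) => /eqP /rowP /(_ i).
  by rewrite !mxE.
by move: fX; rewrite /free XW size_tuple => /eqP.
Qed.

Definition denmx m n (X : 'M[rat]_(m, n)) : nat :=
  (\prod_(ij : 'I_m * 'I_n) `|denq (X ij.1 ij.2)|)%N.

Lemma denmx_gt0 m n (X : 'M[rat]_(m, n)) : (0 < denmx X)%N.
Proof. by rewrite prodn_gt0 // => ij; rewrite absz_gt0 denq_neq0. Qed.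

Lemma denmx_int m n (X : 'M[rat]_(m, n)) i j : (denmx X)%:R * X i j \is a Num.int.
Proof.
rewrite /denmx (bigD1 (i, j)) //= natrM mulrC mulrA.
rewrite rpredM ?natr_int //.
rewrite natr_absz normr_denq -numqE; exact: intr_int.
Qed.

Lemma ratr_intmx m n (X : 'M[rat]_(m, n)) :
  (forall i j, X i j \is a Num.int) -> intmx (map_mx (@ratr R) X).
Proof.
move=> hX i j; rewrite mxE; have := hX i j; move/intrP => [z ->].
by rewrite ratr_int intr_int.
Qed.

Section Main2.
Variables (d : nat) (Aq : 'M[int]_(N, rB)).
Hypothesis d0 : (0 < d)%N.
Hypothesis hd : d%:R *: Bm = map_mx intr Aq *m Bs.

Definition Umat : 'M[R]_N := (d%:R)%:M - map_mx intr Aq *m Es.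
Definition Uq : 'M[rat]_N := (d%:R)%:M - map_mx intr Aq *m rowsub fB 1%:M.

Lemma UmatE : map_mx (@ratr R) Uq = Umat.
Proof.
rewrite /Uq /Umat map_mxB map_mxM map_scalar_mx rmorph_nat.
congr (_ - _ *m _).
  by apply/matrixP => i j; rewrite !mxE rmorph_int.
by apply/matrixP => i j; rewrite !mxE; case: (_ == _); rewrite ?rmorph0 ?rmorph1.
Qed.

Lemma dR0 : (d%:R : R) != 0. Proof. by rewrite pnatr_eq0 -lt0n. Qed.

Lemma U1 : Umat *m Bm = 0.
Proof.
rewrite /Umat mulmxBl mul_scalar_mx -(mulmxA (map_mx intr Aq) Es) -BsE -hd.
by rewrite subrr.
Qed.

Lemma U2 x : x *m Bm = 0 -> d%:R *: x = x *m Umat.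
Proof.
move=> hx.
have hA : x *m map_mx intr Aq = 0.
  apply/eqP; rewrite -(mulmx_free_eq0 _ Bs_free) -mulmxA -hd -scalemxAr hx.
  by rewrite scaler0.
by rewrite /Umat mulmxBr mul_mx_scalar mulmxA hA mul0mx subr0.
Qed.

Lemma rankU : \rank Umat = (N - rB)%N.
Proof.
rewrite -mxrank_ker; apply: eqmx_rank; apply/andP; split.
  by apply/sub_kermxP; exact: U1.
apply/row_subP => i.
have hx : row i (kermx Bm) *m Bm = 0 by apply/sub_kermxP; exact: row_sub.
have := U2 hx => e.
have -> : row i (kermx Bm) = (d%:R^-1 *: row i (kermx Bm)) *m Umat.
  by rewrite -scalemxAl -e scalerA mulVf ?dR0 // scale1r.
exact: submxMl.
Qed.

Definition Kq := kermx Uq^T.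
Definition kk := \rank Kq.
Definition Zq0 := row_base Kq.
Definition Zq : 'M[rat]_(kk, N) := (denmx Zq0)%:R *: Zq0.
Definition Zmat : 'M[R]_(kk, N) := map_mx (@ratr R) Zq.

Lemma Zq_int i j : Zq i j \is a Num.int.
Proof. by rewrite mxE; apply: denmx_int. Qed.

Lemma intZ : intmx Zmat.
Proof. by apply: ratr_intmx; apply: Zq_int. Qed.

Lemma UZq : Uq *m Zq^T = 0.
Proof.
have h : Zq0 *m Uq^T = 0.
  by apply/sub_kermxP; rewrite /Zq0 eq_row_base submx_refl.
have : (Zq0 *m Uq^T)^T = 0 by rewrite h trmx0.
rewrite trmx_mul trmxK => h2.
have -> : Zq^T = (denmx Zq0)%:R *: Zq0^T.
  by apply/matrixP => i j; rewrite !mxE.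
by rewrite -scalemxAr h2 scaler0.
Qed.

Lemma UZ : Umat *m Zmat^T = 0.
Proof. by rewrite -UmatE /Zmat map_trmx -map_mxM UZq map_mx0. Qed.

Lemma rankZ : \rank Zmat = kk.
Proof.
rewrite /Zmat mxrank_map /Zq mxrank_scale_nz; last first.
  by rewrite pnatr_eq0 -lt0n denmx_gt0.
by apply/eqP; exact: row_base_free.
Qed.

Lemma Zfree : row_free Zmat.
Proof. by rewrite /row_free rankZ. Qed.

Lemma kk_eq : kk = rB.
Proof.
rewrite /kk /Kq mxrank_ker mxrank_tr.
have -> : \rank Uq = \rank Umat by rewrite -UmatE mxrank_map.
by rewrite rankU subKn // rank_leq_row.
Qed.

Lemma dotUZ (y : 'rV[R]_N) (t : 'rV[R]_kk) : dotv (y *m Umat) (t *m Zmat) = 0.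
Proof.
by rewrite dotvE trmx_mul -mulmxA (mulmxA Umat) UZ mul0mx mulmx0 mxE.
Qed.

Lemma ZF (t : 'rV[R]_kk) : t *m Zmat \in F.
Proof.
set z := t *m Zmat; set u := z - z *m P.
have zPF := PmF hphi z.
have uP : u *m P = 0 by rewrite /u mulmxBl (Pm_fix hphi zPF) subrr.
have hu := U2 (kerP uP).
have h1 : dotv u z = 0.
  have : d%:R * dotv u z = 0 by rewrite -dotvZl hu dotUZ.
  by move/eqP; rewrite mulf_eq0 (negPf dR0) /= => /eqP.
have h2 : dotv u (z *m P) = 0 by apply: Pm_orth.
have : sqnorm u = 0 by rewrite /sqnorm {2}/u dotvBr h1 h2 subrr.
move/sqnorm_eq0 => /eqP; rewrite /u subr_eq0 => /eqP ->; exact: zPF.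
Qed.

Lemma ZP (t : 'rV[R]_kk) : t *m Zmat *m P = t *m Zmat.
Proof. exact: (Pm_fix hphi (ZF t)). Qed.

Lemma cap0 : (Umat :&: Zmat)%MS = 0.
Proof.
apply/eqP; apply/rowV0P => v; rewrite sub_capmx => /andP [/submxP [a ->] /submxP [b eb]].
apply: sqnorm_eq0; by rewrite /sqnorm {2}eb dotUZ.
Qed.

Lemma rank_col : \rank (col_mx Umat Zmat) = N.
Proof.
rewrite -addsmxE mxrank_disjoint_sum ?cap0 // rankU rankZ kk_eq subnK //.
exact: rank_leq_row.
Qed.

Definition Mq := col_mx Uq Zq.
Definition Xq := pinvmx Mq.
Definition c1 := denmx Xq.
Definition Xr : 'M[R]_(N, N + kk) := map_mx (@ratr R) (c1%:R *: Xq).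

Lemma MqE : map_mx (@ratr R) Mq = col_mx Umat Zmat.
Proof. by rewrite /Mq map_col_mx UmatE. Qed.

Lemma XqM : Xq *m Mq = 1%:M.
Proof.
have h : (1%:M <= Mq)%MS.
  apply: submx_full; rewrite /row_full.
  by rewrite -(mxrank_map (@ratr R)) MqE rank_col.
by have := mulmxKpV h; rewrite mul1mx.
Qed.

Lemma XE : Xr *m col_mx Umat Zmat = (c1%:R)%:M.
Proof.
rewrite -MqE /Xr -map_mxM -scalemxAl XqM scalemx1 map_scalar_mx.
by rewrite rmorph_nat.
Qed.

Lemma intX : intmx Xr.
Proof. by apply: ratr_intmx => i j; rewrite mxE; apply: denmx_int. Qed.

Lemma c1_gt0 : (0 < c1)%N. Proof. exact: denmx_gt0. Qed.

Lemma DEC (y : vec) : c1%:R *: y = lsubmx (y *m Xr) *m Umat + rsubmx (y *m Xr) *m Zmat.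
Proof.
by rewrite -mul_row_col hsubmxK -mulmxA XE mul_mx_scalar.
Qed.

Lemma lUV (y : vec) : y *m Umat *m P \in V.
Proof. by rewrite xP -(mulmxA y Umat (Qm *m P)) U1 mulmx0 addr0 xAm. Qed.

Lemma intU : intmx Umat.
Proof.
apply: intmxB.
  by move=> i j; rewrite mxE rpredMn // natr_int.
apply: intmxM; first exact: intmx_map.
by move=> i j; rewrite !mxE; case: (_ == _); rewrite ?rpred0 ?rpred1.
Qed.

Local Notation FZ := (setI_vs (@int_vec R N) F).
Local Notation H := (sumset FZ (setI_vs L V)).

Lemma FZdec z : int_vec z -> z \in F -> c1%:R *: z = rsubmx (z *m Xr) *m Zmat.
Proof.
move=> zi zF.
have e := DEC z.
set l := lsubmx _ in e; set r := rsubmx _ in e *.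
have eP : c1%:R *: z = l *m Umat *m P + r *m Zmat.
  have := congr1 (fun t => t *m P) e.
  by rewrite /= -scalemxAl (Pm_fix hphi zF) mulmxDl ZP.
set v := l *m Umat *m P in eP.
have ev : v = c1%:R *: z - r *m Zmat by rewrite eP addrK.
have vV : v \in V by apply: lUV.
have vi : int_vec v.
  rewrite ev; apply/int_vecE; apply: intmxB.
    by move=> a b; rewrite mxE rpredM ?natr_int //; apply: (int_vecE z).1.
  apply: intmxM; last exact: intZ.
  apply: intmx_rsub; apply: intmxM; last exact: intX.
  exact: (int_vecE z).1.
have vF : v \in F by rewrite ev memvB ?memvZ // ZF.
have := T1 hphi hdense vi vF vV => /sqnorm_eq0 v0.
by move: ev; rewrite v0 => /eqP; rewrite eq_sym subr_eq0 => /eqP.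
Qed.

Lemma Lsub x y : L x -> L y -> L (x - y).
Proof.
move=> /LE [a [ai ->]] /LE [b [bi ->]]; apply/LE; exists (a - b); split.
  by apply/int_vecE; apply: intmxB; apply/int_vecE.
by rewrite mulmxBl.
Qed.

Lemma Ladd x y : L x -> L y -> L (x + y).
Proof.
move=> /LE [a [ai ->]] /LE [b [bi ->]]; apply/LE; exists (a + b); split.
  by apply/int_vecE; apply: intmxD; apply/int_vecE.
by rewrite mulmxDl.
Qed.

Lemma FZL z : FZ z -> L z.
Proof. by move=> [zi zF]; apply/LE; exists z; rewrite (Pm_fix hphi zF). Qed.

Lemma int0 : int_vec (0 : vec).
Proof. by move=> i; rewrite mxE rpred0. Qed.

Lemma L0 : L 0.
Proof. by apply/LE; exists 0; split; [exact: int0 | rewrite mul0mx]. Qed.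

Lemma concl_sub : is_subgroup_of H L.
Proof.
split; [|split].
- by move=> x [a [b [ha [[hbL _] ->]]]]; apply: Ladd => //; apply: FZL.
- exists 0, 0; split; first by split; [exact: int0 | exact: mem0v].
  by split; [split; [exact: L0 | exact: mem0v] | rewrite addr0].
- move=> x y [a1 [b1 [[a1i a1F] [[b1L b1V] ->]]]] [a2 [b2 [[a2i a2F] [[b2L b2V] ->]]]].
  exists (a1 - a2), (b1 - b2); split.
    split; last by rewrite memvB.
    by apply/int_vecE; apply: intmxB; apply/int_vecE.
  split; first by split; [apply: Lsub | rewrite memvB].
  by rewrite opprD addrACA.
Qed.

Lemma concl_orth x v : real_span FZ x -> v \in V -> dotv x v = 0.
Proof.
case=> n [b [c [hb ->]]] vV; rewrite dotv_suml big1 // => i _.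
by rewrite dotvZl; case: (hb i) => bi bF; rewrite (T1 hphi hdense bi bF vV) mulr0.
Qed.

Lemma concl_fin : finite_index H L.
Proof.
have c0 : (c1%:Z != 0) by rewrite eqz_nat -lt0n c1_gt0.
pose s := [seq (\row_l (((p l : nat)%:R) : R)) *m P | p : {ffun 'I_N -> 'I_c1} <- enum {ffun 'I_N -> 'I_c1}].
exists s => x /LE [y [yi ->]].
pose fl l := Num.floor (y 0 l).
have yiE : forall l, y 0 l = (fl l)%:~R by move=> l; rewrite /fl floorK //; apply: yi.
pose sl l := ((fl l) %% c1%:Z)%Z.
pose ql l := ((fl l) %/ c1%:Z)%Z.
have sl0 : forall l, 0 <= sl l by move=> l; apply: modz_ge0.
have abs_lt : forall l, (`|sl l| < c1)%N.
  by move=> l; rewrite -ltz_nat gez0_abs ?sl0 // ltz_pmod // ltz_nat c1_gt0.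
pose p := [ffun l => Ordinal (abs_lt l)] : {ffun 'I_N -> 'I_c1}.
pose q := \row_l (((ql l)%:~R) : R).
pose sv := \row_l (((p l : nat)%:R) : R).
have ey : y = c1%:R *: q + sv.
  apply/rowP => l; rewrite !mxE ffunE /=.
  rewrite natr_absz ger0_norm ?sl0 // yiE (divz_eq (fl l) c1%:Z) intrD intrM.
  by rewrite mulrC.
have qi : intmx q by move=> a b; rewrite mxE intr_int.
have e := DEC q.
set l := lsubmx _ in e; set r := rsubmx _ in e.
have li : intmx l by apply: intmx_lsub; apply: intmxM => //; exact: intX.
have ri : intmx r by apply: intmx_rsub; apply: intmxM => //; exact: intX.
exists (sv *m P), (c1%:R *: q *m P); split; [|split].
- by apply/mapP; exists p => //; rewrite mem_enum.
- exists (r *m Zmat), (l *m Umat *m P); split.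
    split; last exact: ZF.
    by apply/int_vecE; apply: intmxM => //; exact: intZ.
  split; first split.
  + apply/LE; exists (l *m Umat); split => //.
    by apply/int_vecE; apply: intmxM => //; exact: intU.
  + exact: lUV.
  + by rewrite e mulmxDl ZP addrC.
- by rewrite {1}ey mulmxDl addrC.
Qed.

Lemma concl_rank : lattice_rank FZ (\dim F - \dim V).
Proof.
have hdim : (\dim F - \dim V)%N = kk.
  by rewrite -hVW (dimv_disjoint_sum hcap) dimW addKn kk_eq.
rewrite hdim.
have c1R : (c1%:R : R) != 0 by rewrite pnatr_eq0 -lt0n c1_gt0.
pose T (n : 'rV[R]_kk) := c1%:R^-1 *: (n *m Zmat).
have Tsum : forall (cf : 'I_kk -> int) (v : 'I_kk -> 'rV[R]_kk),
    T (\sum_(i < kk) (cf i)%:~R *: v i) = \sum_(i < kk) (cf i)%:~R *: T (v i).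
  move=> cf v; rewrite /T mulmx_suml scaler_sumr; apply: eq_bigr => i _.
  by rewrite -scalemxAl !scalerA mulrC.
pose G' n := int_vec n /\ FZ (T n).
have zG' : zgroup G'.
  split.
  - split; first by move=> i; rewrite mxE rpred0.
    by rewrite /T mul0mx scaler0; split; [exact: int0 | exact: mem0v].
  - move=> x y [xi [Txi TxF]] [yi [Tyi TyF]]; split.
      by apply/int_vecE; apply: intmxB; apply/int_vecE.
    have -> : T (x - y) = T x - T y by rewrite /T mulmxBl scalerBr.
    split; last by rewrite memvB.
    by apply/int_vecE; apply: intmxB; apply/int_vecE.
  - by move=> x [].
have hc : forall i : 'I_kk, (i < kk)%N -> G' (c1%:R *: delta_mx 0 i).
  move=> i _; split.
    by move=> a; rewrite !mxE rpredM ?natr_int //; case: (_ && _); rewrite ?rpred0 ?rpred1.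
  have -> : T (c1%:R *: delta_mx 0 i) = delta_mx 0 i *m Zmat.
    by rewrite /T -scalemxAl scalerA mulVf // scale1r.
  split; last exact: ZF.
  apply/int_vecE; apply: intmxM; [exact: intmx_delta | exact: intZ].
have supp : forall xx, G' xx -> forall i : 'I_kk, (kk <= i)%N -> xx 0 i = 0.
  by move=> xx _ i hi; move: (ltn_ord i); rewrite ltnNge hi.
have [b' [Gb' ind sp]] := SB c1_gt0 zG' (leqnn kk) supp hc.
exists (fun i => T (b' i)); split; [|split].
- by move=> i; case: (Gb' i).
- move=> cf hcf; apply: ind.
  move: hcf; rewrite -Tsum /T => /eqP; rewrite scaler_eq0 invr_eq0 (negPf c1R) /=.
  by rewrite (mulmx_free_eq0 _ Zfree) => /eqP.
- move=> z [zi zF].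
  set n := rsubmx (z *m Xr).
  have hn : T n = z by rewrite /T -FZdec // scalerA mulVf // scale1r.
  have Gn : G' n.
    split; last by rewrite hn.
    apply/int_vecE; apply: intmx_rsub; apply: intmxM; last exact: intX.
    exact: (int_vecE z).1.
  have [cf hcf] := sp n Gn.
  by exists cf; rewrite -hn hcf Tsum.
Qed.

End Main2.

End Main.

Unset Implicit Arguments.

Theorem lemmaI2p9 (R : realType) (N : nat) (F V W : {vspace 'rV[R]_N})
  (phi : 'rV[R]_N -> 'rV[R]_N) :
  is_orth_proj F phi ->
  (V + W)%VS = F -> (V :&: W)%VS = 0%VS ->
  dense_in (setI_vs (img_lattice phi) V) V ->
  discrete (setI_vs (img_lattice phi) W) ->
  (forall x, img_lattice phi x ->
     sumset (setI_vs (img_lattice phi) V) (setI_vs (img_lattice phi) W) x) ->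
  let FZ := setI_vs (@int_vec R N) F in
  let H := sumset FZ (setI_vs (img_lattice phi) V) in
  [/\ is_subgroup_of H (img_lattice phi),
      finite_index H (img_lattice phi),
      lattice_rank FZ (\dim F - \dim V)%N
    & forall x v, real_span FZ x -> v \in V -> dotv x v = 0].
Proof.
move=> hphi hVW hcap hdense hdisc hdec FZ H.
have rows : forall j : 'I_N, exists t : 'rV[R]_N * 'rV[R]_N,
    [/\ t.1 \in V, t.2 *m Pm phi \in W, int_vec t.2 & row j (Pm phi) = t.1 + t.2 *m Pm phi].
  move=> j.
  have Lj : img_lattice phi (row j (Pm phi)).
    exists (delta_mx 0 j); split; first by apply/int_vecE; apply: intmx_delta.
    by rewrite (phiP hphi) rowE.
  have [a [b [[aL aV] [[[q [qi ->]] bW] e]]]] := hdec _ Lj.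
  by exists (a, q); split => //=; rewrite -(phiP hphi).
have [u hu] := fin_all_exists rows.
pose Am := \matrix_(j < N) (u j).1.
pose Qm := \matrix_(j < N) (u j).2.
have hAm : forall j, row j Am \in V by move=> j; rewrite rowK; case: (hu j).
have hQm : intmx Qm by move=> i j; rewrite mxE; case: (hu i) => _ _ hi _; apply: hi.
have hBW : forall j, row j (Qm *m Pm phi) \in W.
  by move=> j; rewrite row_mul rowK; case: (hu j).
have hP : Pm phi = Am + Qm *m Pm phi.
  apply/row_matrixP => j; rewrite [row j (Am + _)]rowE mulmxDr -!rowE row_mul !rowK.
  by case: (hu j) => _ _ _ e; rewrite -e /Pm rowK.
have [d [Aq [d0 hd]]] := PH_app hphi hdisc hQm hBW.
split.
- exact: concl_sub.
- exact: (concl_fin hphi hcap hAm hBW hP d0 hd).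
- exact: (concl_rank hphi hVW hcap hdense hAm hBW hP d0 hd).
- by move=> x v; apply: (concl_orth hphi hdense).
Qed.
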